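(* Every drawable subset of $\mathbb{R}^2$ is a Borel set.
   Context: For $A\subseteq\mathbb{R}^2$ let $N(A)=\{x\in\mathbb{R}^2: |x-a|<1 \text{ for some } a\in A\}$. Let $\mathcal{D}_1=\{N(A_1): A_1\subseteq\mathbb{R}^2\}$ and for $n\ge 2$ let $\mathcal{D}_n=\{D\cup N(A_n): D\in\mathcal{D}_{n-1}, A_n\subseteq\mathbb{R}^2\}$ if $n$ is odd and $\mathcal{D}_n=\{D\setminus N(A_n): D\in\mathcal{D}_{n-1}, A_n\subseteq\mathbb{R}^2\}$ if $n$ is even. A set is drawable if it lies in $\mathcal{D}=\bigcup_{n\ge1}\mathcal{D}_n$. *)

(* Defs.v *)
(* R^2 is modelled as R * R (product topology = Euclidean topology). *)
From HB Require Import structures.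
From mathcomp Require Import all_boot all_order all_algebra.
From mathcomp Require Import all_classical all_reals all_analysis.
Set Implicit Arguments. Unset Strict Implicit. Unset Printing Implicit Defensive.
Import Order.TTheory GRing.Theory Num.Theory numFieldNormedType.Exports.
Local Open Scope classical_set_scope.
Local Open Scope ring_scope.

Definition edist2 {R : realType} (x a : R * R) : R :=
  Num.sqrt ((x.1 - a.1) ^+ 2 + (x.2 - a.2) ^+ 2).

Definition Nbhd {R : realType} (A : set (R * R)) : set (R * R) :=
  [set x | exists a, A a /\ edist2 x a < 1].

(* D n is the family D_n of the paper for n >= 1; D 0 is empty (unused). *)
Fixpoint Dfam {R : realType} (n : nat) : set (set (R * R)) :=
  match n with
  | 0 => set0
  | 1 => [set E | exists A, E = Nbhd A]
  | m.+1 => [set E | exists D0 A, Dfam m D0 /\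
              E = (if odd m.+1 then D0 `|` Nbhd A else D0 `\` Nbhd A)]
  end.

Definition drawable {R : realType} (E : set (R * R)) : Prop :=
  exists n, (1 <= n)%N /\ Dfam n E.

Definition borel2 {R : realType} (E : set (R * R)) : Prop :=
  <<s (open : set_system (R * R)) >> E.

(* Main.v *)
Require Import Defs.
From mathcomp Require Import all_boot all_order all_algebra.
From mathcomp Require Import all_classical all_reals all_analysis.
Import Order.TTheory GRing.Theory Num.Theory numFieldNormedType.Exports.
Local Open Scope classical_set_scope.
Local Open Scope ring_scope.

Lemma cont_edist2 (R : realType) (a : R * R) : continuous (fun x : R * R => edist2 x a).
Proof.
have -> : (fun x : R * R => edist2 x a) = (fun x => Num.sqrt ((x.1-a.1)*(x.1-a.1) + (x.2-a.2)*(x.2-a.2))).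
  by apply: funext => x; rewrite /edist2 !expr2.
move=> x; apply: continuous_comp; last exact: sqrt_continuous.
apply: cvgD; apply: cvgM; apply: cvgB; (exact: cvg_fst || exact: cvg_snd || exact: cvg_cst).
Qed.

Lemma open_Nbhd (R : realType) (A : set (R * R)) : open (Nbhd A).
Proof.
have -> : Nbhd A = \bigcup_(a in A) ((fun x => edist2 x a) @^-1` [set y | y < 1]).
  apply/seteqP; split => x /=.
    by case=> a [Aa h]; exists a.
  by case=> a Aa h; exists a.
apply: bigcup_open => a _.
by apply: open_comp => [y _|]; [exact: cont_edist2 | exact: open_lt].
Qed.

Lemma Dfam_borel (R : realType) (n : nat) (E : set (R * R)) : Dfam n E -> borel2 E.
Proof.
elim: n E => [//|[|m] IH] E /=.
  by case=> A ->; apply: sub_sigma_algebra; exact: open_Nbhd.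
case=> D0 [A [HD ->]].
have HN : borel2 (Nbhd A) by apply: sub_sigma_algebra; exact: open_Nbhd.
have HD0 : borel2 D0 by exact: IH.
have U : forall X Y : set (R * R), borel2 X -> borel2 Y -> borel2 (X `|` Y).
  move=> X Y hX hY; rewrite -bigcup2E; apply: sigma_algebra_bigcup => -[|[|i]] //=.
  exact: sigma_algebra0.
case: ifP => _; first exact: U.
rewrite setDE -[D0 `&` _]setCK setCI setCK.
apply: sigma_algebraC; apply: U => //; exact: sigma_algebraC.
Qed.

Theorem theorem2p2 (R : realType) (E : set (R * R)) :
  drawable E -> borel2 E.
Proof. by case=> n [_ h]; exact: Dfam_borel h. Qed.
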